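(* Let $n\ge 2$, $b>0$, and let $p_0,\dots,p_{n-2}$ be complex-valued, $C^\infty$, $b$-periodic functions on $\mathbb{R}$; let $\mathcal{L}u := u^{(n)}+\sum_{k=0}^{n-2}p_k(x)u^{(k)}$. Fix $l\in\{0,1,\dots,2n-1\}$, let $S_l=\{\zeta\in\mathbb{C}: l\pi/n\le\arg\zeta\le(l+1)\pi/n\}$, fix $B\ge b$, and let $\omega_1,\dots,\omega_n$ be the $n$ distinct $n$-th roots of unity. Suppose that there are constants $Z,K>0$ such that for every $\zeta\in S_l$ with $|\zeta|>Z$, $y_1=y_1(x;\zeta),\dots,y_n=y_n(x;\zeta)$ are linearly independent solutions of $\mathcal{L}y=\zeta^n y$ satisfying $$\left|\frac{y_j^{(k-1)}(x;\zeta)}{\omega_j^{k-1}\zeta^{k-1}e^{\omega_j\zeta x}}-1\right|\le\frac{K}{|\zeta|},\qquad j,k=1,\dots,n,\ x\in[0,B].$$ Let $Y=[\gamma_{ij}]_{1\le i,j\le n}$ be the matrix of the shift $(\mathcal{T}f)(x)=f(x+b)$ with respect to the basis $y_1,\dots,y_n$, i.e. $y_j(x+b)=\sum_{i=1}^n\gamma_{ij}y_i(x)$. Then $$\gamma_{ij}=e^{\omega_j\zeta b}\left[\delta_{ij}+O(\zeta^{-1})\right]\qquad\text{as }\zeta\to\infty,\ \zeta\in S_l .$$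
   Context: Such solutions $y_j$ (called Naimark solutions) exist for $|\zeta|$ sufficiently large in each sector $S_l$. $\delta_{ij}$ is the Kronecker delta. *)

(* Defs.v *)
From Stdlib Require Import Reals Arith.
From Coquelicot Require Export Coquelicot.
Open Scope R_scope.

Definition cexp (z : C) : C :=
  (exp (Re z) * cos (Im z), exp (Re z) * sin (Im z)).

Definition derivs_upto (m : nat) (f : R -> C) (D : nat -> R -> C) : Prop :=
  (forall x, D 0%nat x = f x) /\
  (forall k x, (k < m)%nat -> is_derive (D k) x (D (S k) x)).

Definition smooth (f : R -> C) : Prop :=
  exists D : nat -> R -> C,
    (forall x, D 0%nat x = f x) /\
    (forall k x, is_derive (D k) x (D (S k) x)).

Definition sector (n l : nat) (z : C) : Prop :=
  exists theta : R,
    INR l * PI / INR n <= theta <= (INR l + 1) * PI / INR n /\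
    z = (Cmod z * cos theta, Cmod z * sin theta).

Definition kdelta (i j : nat) : C := if Nat.eqb i j then 1%C else 0%C.

(* Main.v *)
Require Import Defs.
From Stdlib Require Import Reals Arith Lia Lra.
From Coquelicot Require Import Coquelicot.
Open Scope R_scope.

Fixpoint csum (f : nat -> C) (N : nat) : C :=
  match N with O => RtoC 0 | S N' => (csum f N' + f N')%C end.

Lemma sum_n_csum (f : nat -> C) N : sum_n f N = csum f (S N).
Proof.
  induction N.
  - rewrite sum_O. simpl. ring.
  - rewrite sum_Sn, IHN. reflexivity.
Qed.

Lemma is_derive_lin {V W : NormedModule R_AbsRing} (h : V -> W) (f : R -> V) x l :
  is_linear h -> is_derive f x l -> is_derive (fun t => h (f t)) x (h l).
Proof.
  intros Hh Hf. unfold is_derive in *.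
  eapply filterdiff_ext_lin.
  - eapply filterdiff_comp. exact Hf. apply filterdiff_linear. exact Hh.
  - intros y. simpl. apply (linear_scal h Hh).
Qed.

Lemma normCR (x : C) : norm (K:=R_AbsRing) (V:=C_R_NormedModule) x = Cmod x.
Proof. destruct x as [a b]. unfold norm; simpl. unfold prod_norm, Cmod; simpl.
  unfold norm; simpl. unfold abs; simpl. rewrite !Rmult_1_r, <- !Rabs_mult, !Rabs_right; try reflexivity;
  apply Rle_ge; apply Rle_0_sqr. Qed.

Lemma Cmult_linear (c : C) : is_linear (U:=C_R_NormedModule) (V:=C_R_NormedModule) (fun z : C => (c * z)%C).
Proof.
  split.
  - intros x y. destruct x, y, c. unfold plus; simpl; unfold prod_plus; simpl. change plus with Rplus. apply injective_projections; simpl; ring.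
  - intros k x. destruct x as [a b0], c as [c1 c2]. unfold scal; simpl. unfold prod_scal. simpl. change scal with Rmult. apply injective_projections; simpl; ring.
  - exists (Cmod c + 1). split. pose proof (Cmod_ge_0 c); lra.
    intros x. rewrite !normCR. rewrite Cmod_mult.
    pose proof (Cmod_ge_0 x). nra.
Qed.
Lemma Re_linear : is_linear (U:=C_R_NormedModule) (V:=R_NormedModule) (fun z : C => Re z).
Proof.
  split.
  - intros x y. reflexivity.
  - intros k x. reflexivity.
  - exists 1. split. lra. intros x. rewrite normCR. change (Rabs (Re x) <= 1 * Cmod x).
    pose proof (re_le_Cmod x). lra.
Qed.

Lemma Im_linear : is_linear (U:=C_R_NormedModule) (V:=R_NormedModule) (fun z : C => Im z).
Proof.
  split.
  - intros x y. reflexivity.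
  - intros k x. reflexivity.
  - exists 1. split. lra. intros x. rewrite normCR. change (Rabs (Im x) <= 1 * Cmod x).
    pose proof (Rmax_Cmod x). pose proof (Rmax_r (Rabs (fst x)) (Rabs (snd x))). unfold Im. lra.
Qed.

Lemma derive_C_unique (f : R -> C) x l1 l2 :
  is_derive (K:=R_AbsRing) (V:=C_R_NormedModule) f x l1 ->
  is_derive (K:=R_AbsRing) (V:=C_R_NormedModule) f x l2 -> l1 = l2.
Proof.
  intros H1 H2.
  pose proof (is_derive_lin _ _ _ _ Re_linear H1) as R1.
  pose proof (is_derive_lin _ _ _ _ Re_linear H2) as R2.
  pose proof (is_derive_lin _ _ _ _ Im_linear H1) as I1.
  pose proof (is_derive_lin _ _ _ _ Im_linear H2) as I2.
  apply is_derive_unique in R1, R2, I1, I2.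
  destruct l1, l2. simpl in *. f_equal; congruence.
Qed.

Lemma is_derive_csum (g g' : nat -> R -> C) x N :
  (forall i, (i < N)%nat -> is_derive (K:=R_AbsRing) (V:=C_R_NormedModule) (g i) x (g' i x)) ->
  is_derive (K:=R_AbsRing) (V:=C_R_NormedModule) (fun t => csum (fun i => g i t) N) x (csum (fun i => g' i x) N).
Proof.
  induction N; intros H.
  - simpl. apply (is_derive_const (K:=R_AbsRing) (V:=C_R_NormedModule) (RtoC 0)).
  - simpl. apply (is_derive_plus (K:=R_AbsRing) (V:=C_R_NormedModule)).
    + apply IHN. intros; apply H; lia.
    + apply H; lia.
Qed.

Lemma csum_ext (f g : nat -> C) N : (forall i, (i < N)%nat -> f i = g i) -> csum f N = csum g N.
Proof. induction N; intros H; simpl. reflexivity. rewrite IHN by (intros; apply H; lia). rewrite H by lia. reflexivity. Qed.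

Lemma scal1 (v : C) : scal (K:=R_AbsRing) (V:=C_R_NormedModule) 1 v = v.
Proof. destruct v. unfold scal; simpl; unfold prod_scal; simpl. change scal with Rmult. f_equal; ring. Qed.

Lemma shift_rel n b (f : nat -> R -> C) (D : nat -> nat -> R -> C) (g : nat -> C) j :
  (forall i, (i < n)%nat -> derivs_upto n (f i) (D i)) -> (j < n)%nat ->
  (forall x, f j (x+b) = csum (fun i => (g i * f i x)%C) n) ->
  forall k, (k < n)%nat -> forall x, D j k (x+b) = csum (fun i => (g i * D i k x)%C) n.
Proof.
  intros HD Hj Hf k. induction k; intros Hk x.
  - destruct (HD j Hj) as [H0 _]. rewrite H0, Hf. apply csum_ext. intros i Hi.
    destruct (HD i Hi) as [H0' _]. rewrite H0'. reflexivity.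
  - assert (H1 : is_derive (K:=R_AbsRing) (V:=C_R_NormedModule) (fun t => D j k (t+b)) x (D j (S k) (x+b))).
    { destruct (HD j Hj) as [_ Hd].
      pose proof (is_derive_comp (K:=R_AbsRing) (V:=C_R_NormedModule) (D j k) (fun t => t + b) x (D j (S k) (x+b)) 1) as Hc.
      assert (Hg : is_derive (K:=R_AbsRing) (V:=R_NormedModule) (fun t : R => t + b) x 1) by (auto_derive; auto; ring).
      specialize (Hc (Hd k (x+b) ltac:(lia)) Hg). rewrite scal1 in Hc. exact Hc. }
    assert (H2 : is_derive (K:=R_AbsRing) (V:=C_R_NormedModule) (fun t => csum (fun i => (g i * D i k t)%C) n) x
                  (csum (fun i => (g i * D i (S k) x)%C) n)).
    { apply (is_derive_csum (fun i t => (g i * D i k t)%C) (fun i t => (g i * D i (S k) t)%C)).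
      intros i Hi. apply (is_derive_lin (fun z => (g i * z)%C) (D i k)). apply Cmult_linear.
      destruct (HD i Hi) as [_ Hd]. apply Hd. lia. }
    apply (derive_C_unique (fun t => D j k (t + b))  x). exact H1.
    eapply is_derive_ext. 2: exact H2. intros t. simpl. rewrite IHk by lia. reflexivity.
Qed.

Fixpoint rsum (f : nat -> R) (N : nat) : R :=
  match N with O => 0 | S N' => rsum f N' + f N' end.

Lemma rsum_ext (f g : nat -> R) N : (forall i, (i < N)%nat -> f i = g i) -> rsum f N = rsum g N.
Proof. induction N; intros H; simpl. reflexivity. rewrite IHN by (intros; apply H; lia). rewrite H by lia. reflexivity. Qed.

Lemma rsum_le (f g : nat -> R) N : (forall i, (i < N)%nat -> f i <= g i) -> rsum f N <= rsum g N.
Proof. induction N; intros H; simpl. lra. pose proof (H N ltac:(lia)). pose proof (IHN ltac:(intros; apply H; lia)). lra. Qed.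

Lemma rsum_const c N : rsum (fun _ => c) N = INR N * c.
Proof. induction N; cbn [rsum]. simpl; ring. rewrite IHN, S_INR. ring. Qed.

Lemma rsum_plus (f g : nat -> R) N : rsum (fun i => f i + g i) N = rsum f N + rsum g N.
Proof. induction N; simpl. ring. rewrite IHN. ring. Qed.

Lemma rsum_mult_r (f : nat -> R) a N : rsum (fun i => f i * a) N = rsum f N * a.
Proof. induction N; simpl. ring. rewrite IHN. ring. Qed.

Lemma rsum_nonneg (f : nat -> R) N : (forall i, (i < N)%nat -> 0 <= f i) -> 0 <= rsum f N.
Proof. induction N; intros H; simpl. lra. pose proof (H N ltac:(lia)). pose proof (IHN ltac:(intros; apply H; lia)). lra. Qed.

Lemma rsum_delta (f : nat -> R) N m : (m < N)%nat -> (forall i, (i < N)%nat -> i <> m -> f i = 0) -> rsum f N = f m.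
Proof.
  induction N; intros Hm H. lia. simpl.
  destruct (Nat.eq_dec m N) as [->|Hne].
  - rewrite (rsum_ext f (fun _ => 0)), rsum_const. ring. intros; apply H; lia.
  - rewrite IHN by (try lia; intros; apply H; lia). rewrite (H N) by lia. ring.
Qed.

Lemma csum_plus (f g : nat -> C) N : csum (fun i => f i + g i)%C N = (csum f N + csum g N)%C.
Proof. induction N; simpl. ring. rewrite IHN. ring. Qed.

Lemma csum_mult_l (f : nat -> C) a N : (a * csum f N)%C = csum (fun i => a * f i)%C N.
Proof. induction N; simpl. ring. rewrite <- IHN. ring. Qed.

Lemma csum_swap (F : nat -> nat -> C) N M :
  csum (fun k => csum (fun i => F k i) M) N = csum (fun i => csum (fun k => F k i) N) M.
Proof.
  induction N; simpl.
  - induction M; simpl. ring. rewrite <- IHM. ring.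
  - rewrite IHN. rewrite <- csum_plus. reflexivity.
Qed.

Lemma csum_delta (f : nat -> C) N m : (m < N)%nat -> (forall i, (i < N)%nat -> i <> m -> f i = 0%C) -> csum f N = f m.
Proof.
  induction N; intros Hm H. lia. simpl.
  destruct (Nat.eq_dec m N) as [->|Hne].
  - rewrite (csum_ext f (fun _ => RtoC 0)). 2: intros; apply H; lia.
    assert (csum (fun _ => RtoC 0) N = RtoC 0) as ->. { clear. induction N; simpl. reflexivity. rewrite IHN. ring. }
    ring.
  - rewrite IHN by (try lia; intros; apply H; lia). rewrite (H N) by lia. ring.
Qed.

Lemma csum_bound (f : nat -> C) (a : nat -> R) N : (forall i, (i < N)%nat -> Cmod (f i) <= a i) -> Cmod (csum f N) <= rsum a N.
Proof.
  induction N; intros H; simpl. rewrite Cmod_0. lra.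
  eapply Rle_trans. apply Cmod_triangle. pose proof (H N ltac:(lia)). pose proof (IHN ltac:(intros; apply H; lia)). lra.
Qed.

Lemma geom (r : C) N : ((r - 1) * csum (fun k => r ^ k) N = r ^ N - 1)%C.
Proof. induction N; simpl. ring. rewrite Cmult_plus_distr_l, IHN. ring. Qed.

Lemma csum_one N : csum (fun k => RtoC 1 ^ k)%C N = RtoC (INR N).
Proof. induction N; cbn [csum]. reflexivity. rewrite IHN, Cpow_1_l, S_INR. apply injective_projections; simpl; ring. Qed.

Lemma Cmult_eq0 (a b : C) : (a * b = 0)%C -> a <> 0%C -> b = 0%C.
Proof. intros H Ha. apply Cmod_eq_0. assert (Cmod (a*b) = 0) by (rewrite H; apply Cmod_0).
  rewrite Cmod_mult in H0. apply Cmod_gt_0 in Ha. nra. Qed.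

Lemma geom_root (r : C) N : (r ^ N = 1)%C -> csum (fun k => r ^ k)%C N = if Ceq_dec r 1 then RtoC (INR N) else RtoC 0.
Proof.
  intros H. destruct (Ceq_dec r 1) as [->|Hne].
  - apply csum_one.
  - apply (Cmult_eq0 (r - 1)). rewrite geom, H. ring. intros E. apply Hne.
    replace r with ((r - 1) + 1)%C by ring. rewrite E. ring.
Qed.

Lemma mod_root (x : R) n : 0 <= x -> (0 < n)%nat -> x ^ n = 1 -> x = 1.
Proof.
  intros Hx Hn H. destruct (Rlt_le_dec x 1).
  - pose proof (pow_lt_1_compat x n ltac:(lra) Hn). lra.
  - destruct (Rle_lt_or_eq_dec 1 x r); auto. pose proof (Rlt_pow_R1 x n r0 Hn). lra.
Qed.

Lemma pow_pred (z : C) n : (1 <= n)%nat -> (z * z ^ (n - 1))%C = (z ^ n)%C.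
Proof. intros H. replace n with (S (n-1)) at 2 by lia. rewrite Cpow_S. reflexivity. Qed.

Lemma orth n (w : nat -> C) : (1 <= n)%nat -> (forall i, (i < n)%nat -> (w i ^ n)%C = 1%C) ->
  (forall i j, (i < n)%nat -> (j < n)%nat -> w i = w j -> i = j) ->
  forall i m, (i < n)%nat -> (m < n)%nat ->
  csum (fun k => (w m ^ (n-1) * w i) ^ k)%C n = if Nat.eqb i m then RtoC (INR n) else RtoC 0.
Proof.
  intros Hn Hr Hinj i m Hi Hm.
  rewrite geom_root.
  2:{ rewrite Cpow_mult_l, <- Cpow_mult_r, Nat.mul_comm, Cpow_mult_r, Hr, Hr by auto. rewrite Cpow_1_l. ring. }
  destruct (Ceq_dec _ 1) as [E|E]; destruct (Nat.eqb_spec i m) as [->|Hne]; auto.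
  - exfalso. apply Hne. apply Hinj; auto.
    transitivity (w m * (w m ^ (n-1) * w i))%C. rewrite Cmult_assoc, pow_pred, Hr by auto. ring.
    rewrite E. ring.
  - exfalso. apply E. rewrite Cmult_comm, pow_pred by auto. auto.
Qed.

Lemma key n (w : nat -> C) j (c : nat -> C) (e : nat -> nat -> C) (e' : nat -> C) eta :
  (1 <= n)%nat -> (forall i, (i < n)%nat -> (w i ^ n)%C = 1%C) ->
  (forall i j, (i < n)%nat -> (j < n)%nat -> w i = w j -> i = j) ->
  (j < n)%nat -> 0 <= eta -> INR n * eta <= 1/2 ->
  (forall i k, (i < n)%nat -> (k < n)%nat -> Cmod (e i k) <= eta) ->
  (forall k, (k < n)%nat -> Cmod (e' k) <= eta) ->
  (forall k, (k < n)%nat -> csum (fun i => c i * w i ^ k * (1 + e i k))%C n = (w j ^ k * (1 + e' k))%C) ->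
  forall m, (m < n)%nat -> Cmod (c m - kdelta m j)%C <= 4 * eta.
Proof.
  intros Hn Hr Hinj Hj Heta Hneta He He' Heq.
  assert (Hw : forall i, (i < n)%nat -> Cmod (w i) = 1).
  { intros i Hi. apply (mod_root _ n). apply Cmod_ge_0. lia. rewrite <- Cmod_pow, Hr, Cmod_1; auto. }
  set (S := rsum (fun i => Cmod (c i)) n).
  assert (HS0 : 0 <= S) by (apply rsum_nonneg; intros; apply Cmod_ge_0).
  assert (Hnpos : 0 < INR n) by (apply lt_0_INR; lia).
  assert (Bm : forall m, (m < n)%nat -> Cmod (c m - kdelta m j)%C <= eta * (1 + S)).
  { intros m Hm.
    set (u := (w m ^ (n-1))%C).
    assert (Hr1 : forall i k, (i < n)%nat -> Cmod ((u * w i) ^ k)%C = 1).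
    { intros i k Hi. rewrite Cmod_pow, Cmod_mult. unfold u. rewrite Cmod_pow, !Hw by auto.
      rewrite pow1. rewrite Rmult_1_l, pow1. reflexivity. }
    set (Y := csum (fun k => (u * w j) ^ k * e' k)%C n).
    set (Q := csum (fun k => csum (fun i => c i * (u * w i) ^ k * e i k) n)%C n).
    assert (HA : (RtoC (INR n) * (c m - kdelta m j) = Y - Q)%C).
    { assert (H1 : csum (fun k => csum (fun i => c i * (u * w i) ^ k * (1 + e i k)) n)%C n
                   = csum (fun k => (u * w j) ^ k * (1 + e' k))%C n).
      { apply csum_ext. intros k Hk.
        transitivity (u ^ k * csum (fun i => c i * w i ^ k * (1 + e i k)) n)%C.
        - rewrite csum_mult_l. apply csum_ext. intros i Hi. rewrite Cpow_mult_l. ring.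
        - rewrite Heq by auto. rewrite Cpow_mult_l. ring. }
      rewrite (csum_ext _ (fun k => (csum (fun i => c i * (u * w i) ^ k) n
                + csum (fun i => c i * (u * w i) ^ k * e i k) n))%C) in H1.
      2:{ intros k Hk. rewrite <- csum_plus. apply csum_ext. intros; ring. }
      rewrite csum_plus in H1.
      rewrite (csum_ext (fun k => (u * w j) ^ k * (1 + e' k))%C
                (fun k => ((u * w j) ^ k + (u * w j) ^ k * e' k))%C) in H1 by (intros; ring).
      rewrite csum_plus in H1.
      rewrite csum_swap in H1.
      rewrite (csum_ext (fun i => csum (fun k => c i * (u * w i) ^ k) n)%C
                (fun i => c i * (if Nat.eqb i m then RtoC (INR n) else RtoC 0))%C) in H1.
      2:{ intros i Hi. rewrite <- csum_mult_l. unfold u. rewrite orth; auto. }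
      rewrite (csum_delta _ n m) in H1; auto.
      2:{ intros i Hi Hne. apply Nat.eqb_neq in Hne. rewrite Hne. ring. }
      unfold u in H1. rewrite orth in H1 by auto. rewrite Nat.eqb_refl in H1.
      fold u in H1. fold Y Q in H1.
      unfold kdelta. rewrite (Nat.eqb_sym m j).
      destruct (Nat.eqb j m).
      - transitivity ((c m * RtoC (INR n) + Q) - RtoC (INR n) - Q)%C. ring. rewrite H1. ring.
      - transitivity ((c m * RtoC (INR n) + Q) - Q)%C. ring. rewrite H1. ring. }
    assert (HY : Cmod Y <= INR n * eta).
    { rewrite <- rsum_const. apply csum_bound. intros k Hk. rewrite Cmod_mult, Hr1 by auto.
      rewrite Rmult_1_l. auto. }
    assert (HQ : Cmod Q <= INR n * (S * eta)).
    { rewrite <- rsum_const. apply csum_bound. intros k Hk. unfold S. rewrite <- rsum_mult_r.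
      apply csum_bound. intros i Hi. rewrite !Cmod_mult, Hr1 by auto. rewrite Rmult_1_r.
      apply Rmult_le_compat_l. apply Cmod_ge_0. auto. }
    assert (Cmod (RtoC (INR n) * (c m - kdelta m j))%C <= INR n * eta + INR n * (S * eta)).
    { rewrite HA. unfold Cminus. eapply Rle_trans. apply Cmod_triangle. rewrite Cmod_opp. lra. }
    rewrite Cmod_mult, Cmod_R, Rabs_right in H by lra.
    apply (Rmult_le_reg_l (INR n)); auto. nra. }
  assert (HS : S <= 3).
  { assert (S <= 1 + INR n * (eta * (1 + S))).
    { assert (HSd : S = rsum (fun i => Cmod (c i)) n) by reflexivity. clearbody S.
      assert (Hd : rsum (fun i => Cmod (kdelta i j)) n = 1).
      { rewrite (rsum_delta _ n j); auto. unfold kdelta. rewrite Nat.eqb_refl. apply Cmod_1.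
        intros i Hi Hne. unfold kdelta. apply Nat.eqb_neq in Hne. rewrite Hne. apply Cmod_0. }
      apply Rle_trans with (rsum (fun i => Cmod (kdelta i j) + eta * (1 + S)) n).
      2:{ rewrite rsum_plus, Hd, rsum_const. lra. }
      rewrite HSd. apply rsum_le. intros i Hi.
      replace (c i) with (kdelta i j + (c i - kdelta i j))%C at 1 by ring.
      eapply Rle_trans. apply Cmod_triangle. pose proof (Bm i Hi). rewrite <- HSd. lra. }
    assert (INR n * eta * S <= 1/2 * S) by (apply Rmult_le_compat_r; lra).
    nra. }
  intros m Hm. eapply Rle_trans. apply Bm; auto. nra.
Qed.

Lemma cexp_neg z : (cexp (- z) * cexp z = 1)%C.
Proof.
  destruct z as [a t]. unfold cexp, Re, Im; simpl.
  rewrite cos_neg, sin_neg, exp_Ropp. pose proof (exp_pos a). pose proof (sin2_cos2 t).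
  apply injective_projections; simpl; field_simplify; try lra. unfold Rsqr in H0. nra.
Qed.

Lemma cexp_zero a : cexp (a * RtoC 0) = 1%C.
Proof.
  assert (E : (a * RtoC 0 = RtoC 0)%C) by ring. rewrite E. unfold cexp, Re, Im; simpl.
  rewrite exp_0, cos_0, sin_0. apply injective_projections; simpl; ring.
Qed.

Lemma fin_choice {A : Type} (a0 : A) (P : nat -> A -> Prop) n :
  (forall i, (i < n)%nat -> exists x, P i x) -> exists F : nat -> A, forall i, (i < n)%nat -> P i (F i).
Proof.
  induction n; intros H.
  - exists (fun _ => a0). intros; lia.
  - destruct IHn as [F HF]. intros; apply H; lia.
    destruct (H n ltac:(lia)) as [x Hx].
    exists (fun i => if Nat.eqb i n then x else F i). intros i Hi.
    destruct (Nat.eqb_spec i n). subst; auto. apply HF; lia.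
Qed.

Theorem theorem1
  (n : nat) (b B : R) (l : nat) (Z K : R)
  (p : nat -> R -> C)
  (omega : nat -> C)
  (y : C -> nat -> R -> C)
  (gamma : C -> nat -> nat -> C)
  (Hn : (2 <= n)%nat)
  (Hb : 0 < b)
  (Hsmooth : forall k, (k <= n - 2)%nat -> smooth (p k))
  (Hper : forall k x, (k <= n - 2)%nat -> p k (x + b) = p k x)
  (Hl : (l <= 2 * n - 1)%nat)
  (HB : b <= B)
  (Homega_root : forall j, (j < n)%nat -> Cpow (omega j) n = 1%C)
  (Homega_inj : forall i j, (i < n)%nat -> (j < n)%nat -> omega i = omega j -> i = j)
  (HZ : 0 < Z) (HK : 0 < K)
  (Hindep : forall zeta : C, sector n l zeta -> Z < Cmod zeta ->
     forall c : nat -> C,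
       (forall x, sum_n (fun j => (c j * y zeta j x)%C) (n - 1) = RtoC 0) ->
       forall j, (j < n)%nat -> c j = RtoC 0)
  (Hsol : forall zeta : C, sector n l zeta -> Z < Cmod zeta ->
     forall j, (j < n)%nat ->
       exists D : nat -> R -> C,
         derivs_upto n (y zeta j) D /\
         (* L y_j = zeta^n y_j *)
         (forall x, (D n x + sum_n (fun k => (p k x * D k x)%C) (n - 2))%C
                    = (Cpow zeta n * D 0%nat x)%C) /\
         (* asymptotic estimates on [0, B] *)
         (forall k x, (k < n)%nat -> 0 <= x <= B ->
            Cmod ((D k x / (Cpow (omega j) k * Cpow zeta k
                             * cexp (omega j * zeta * RtoC x)))%C - 1%C)
              <= K / Cmod zeta))
  (Hgamma : forall zeta : C, sector n l zeta -> Z < Cmod zeta ->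
     forall j x, (j < n)%nat ->
       y zeta j (x + b) = sum_n (fun i => (gamma zeta i j * y zeta i x)%C) (n - 1)) :
  exists M Z0 : R, 0 < M /\
    forall zeta : C, sector n l zeta -> Z0 < Cmod zeta ->
      forall i j, (i < n)%nat -> (j < n)%nat ->
        Cmod ((gamma zeta i j * cexp (- (omega j * zeta * RtoC b)))%C - kdelta i j)
          <= M / Cmod zeta.
Proof.
  set (Z0 := Z + 2 * INR n * K).
  exists (4 * K), Z0. split. lra.
  intros zeta Hs Hz i j Hi Hj.
  assert (Hn1 : (1 <= n)%nat) by lia.
  assert (Hnpos : 0 < INR n) by (apply lt_0_INR; lia).
  assert (HZ0 : 0 < 2 * INR n * K) by (apply Rmult_lt_0_compat; lra).
  assert (Hz' : Z < Cmod zeta) by (unfold Z0 in Hz; lra).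
  assert (Hzpos : 0 < Cmod zeta) by lra.
  assert (Hz0 : zeta <> 0%C) by (apply Cmod_gt_0; auto).
  set (eta := K / Cmod zeta).
  assert (Heta0 : 0 <= eta) by (unfold eta; apply Rlt_le, Rdiv_lt_0_compat; lra).
  assert (Hneta : INR n * eta <= 1/2).
  { unfold eta. apply (Rmult_le_reg_r (2 * Cmod zeta)). lra. field_simplify; try lra.
    unfold Z0 in Hz. lra. }
  assert (Hw0 : forall i, (i < n)%nat -> omega i <> 0%C).
  { intros i0 Hi0 E. pose proof (Homega_root i0 Hi0) as R. rewrite E in R.
    replace n with (S (n-1)) in R by lia. rewrite Cpow_S in R.
    assert (R' : (RtoC 0 = RtoC 1)%C) by (rewrite <- R; ring). apply RtoC_inj in R'. lra. }
  destruct (fin_choice (fun _ _ => RtoC 0) _ n (Hsol zeta Hs Hz')) as [DD HDD].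
  assert (Hder : forall i, (i < n)%nat -> derivs_upto n (y zeta i) (DD i)) by (intros; apply HDD; auto).
  assert (Hrel : forall k, (k < n)%nat -> DD j k b = csum (fun i => (gamma zeta i j * DD i k 0)%C) n).
  { intros k Hk. replace b with (0 + b) at 1 by ring. apply (shift_rel n b (y zeta)); auto.
    intros x. rewrite (Hgamma zeta Hs Hz' j x Hj), sum_n_csum. f_equal. lia. }
  set (E := cexp (omega j * zeta * RtoC b)).
  set (F := cexp (- (omega j * zeta * RtoC b))).
  assert (HEF : (F * E = 1)%C) by apply cexp_neg.
  assert (HE0 : E <> 0%C).
  { intros H0. rewrite H0 in HEF. assert (R' : (RtoC 0 = RtoC 1)%C) by (rewrite <- HEF; ring). apply RtoC_inj in R'. lra. }
  set (e := fun i k => (DD i k 0 / (omega i ^ k * zeta ^ k * cexp (omega i * zeta * RtoC 0)) - 1)%C).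
  set (e' := fun k => (DD j k b / (omega j ^ k * zeta ^ k * cexp (omega j * zeta * RtoC b)) - 1)%C).
  assert (HB0 : 0 <= 0 <= B) by lra.
  assert (Hbb : 0 <= b <= B) by lra.
  pose proof (key n omega j (fun i => gamma zeta i j * F)%C e e' eta Hn1 Homega_root Homega_inj Hj Heta0 Hneta) as Hk.
  replace (4 * K / Cmod zeta) with (4 * eta) by (unfold eta; field; lra).
  apply Hk; auto.
  - intros i0 k Hi0 Hk0. destruct (HDD i0 Hi0) as [_ [_ Hest]]. apply Hest; auto.
  - intros k Hk0. destruct (HDD j Hj) as [_ [_ Hest]]. apply Hest; auto.
  - intros k Hk0.
    assert (Hzk : (zeta ^ k <> 0)%C) by (apply Cpow_nz; auto).
    assert (Hwj : (omega j ^ k <> 0)%C) by (apply Cpow_nz; auto).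
    transitivity (csum (fun i => gamma zeta i j * DD i k 0)%C n * (F / zeta ^ k))%C.
    + rewrite Cmult_comm, csum_mult_l. apply csum_ext. intros i0 Hi0.
      assert (Hwi : (omega i0 ^ k <> 0)%C) by (apply Cpow_nz; auto).
      unfold e. rewrite cexp_zero. field. auto.
    + rewrite <- Hrel by auto.
      replace F with (/ E)%C.
      2:{ transitivity (F * E * / E)%C. rewrite HEF. ring. field. auto. }
      unfold e'. fold E. field. auto.
Qed.
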